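(* Let $n\ge 1$, let $M_n=\{1,\dots,n\}$, and let $\mathcal{F}\subset 2^{M_n}$ be a union-closed family (i.e. $A\cup B\in\mathcal{F}$ whenever $A,B\in\mathcal{F}$) with $\bigcup_{A\in\mathcal{F}}A=M_n$. Then for any $A\in\mathcal{F}$ with $|A|\ge 2$, there exists $y\in A$ such that $$|\{F\in\mathcal{F}: y\in F\}|\ge \frac{1}{2^{|A|-2}+1}|\mathcal{F}|.$$
   Context: $|X|$ denotes the cardinality of a set $X$; $2^{M_n}$ is the power set of $M_n$. *)

(* Defs.v *)
From mathcomp Require Import all_boot all_order all_algebra.
Set Implicit Arguments. Unset Strict Implicit. Unset Printing Implicit Defensive.

(* The ground set M_n = {1,...,n} is modelled by 'I_n = {0,...,n-1}. *)
Definition union_closed (T : finType) (FF : {set {set T}}) : Prop :=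
  forall A B, A \in FF -> B \in FF -> A :|: B \in FF.

(* Main.v *)
Require Import Defs.
From mathcomp Require Import all_boot all_order all_algebra.
From mathcomp Require Import zify.
Import Order.TTheory GRing.Theory Num.Theory.

Lemma key_nat (T : finType) (FF : {set {set T}}) :
  union_closed FF ->
  forall A, A \in FF -> (2 <= #|A|)%N ->
  exists2 y, y \in A &
    (#|FF| <= (2 ^ (#|A| - 2) + 1) * #|[set F in FF | y \in F]|)%N.
Proof.
move=> uc A AF A2.
have /card_gt1P [a [b [aA bA ab]]] : (1 < #|A|)%N by [].
set Sa := [set F in FF | a \in F].
set Sb := [set F in FF | b \in F].
set SA := [set F in FF | A \subset F].
set X0 := FF :\: (Sa :|: Sb).
set D := A :\ a :\ b.
have hD : #|D| = (#|A| - 2)%N.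
  have := cardsD1 a A; have := cardsD1 b (A :\ a).
  rewrite aA !inE eq_sym ab bA /= -/D. lia.
have hSAab : SA \subset Sa :&: Sb.
  apply/subsetP => F; rewrite !inE => /andP [FF' /subsetP sub].
  by rewrite FF' !sub.
have hU : FF :&: (Sa :|: Sb) = Sa :|: Sb.
  apply/setIidPr/subsetP => F; rewrite !inE; by case: (F \in FF).
have hFF := cardsID (Sa :|: Sb) FF. rewrite hU -/X0 in hFF.
have hUI := cardsUI Sa Sb.
have hSA1 := subset_leq_card hSAab.
have hSAa : (#|SA| <= #|Sa|)%N.
  apply: subset_leq_card; apply/subsetP => F; rewrite !inE =>/andP[-> /subsetP s].
  by rewrite s.
have hSAb : (#|SA| <= #|Sb|)%N.
  apply: subset_leq_card; apply/subsetP => F; rewrite !inE =>/andP[-> /subsetP s].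
  by rewrite s.
have hX0 : (#|X0| <= 2 ^ (#|A| - 2) * #|SA|)%N.
  pose f := fun F : {set T} => (F :&: A, F :|: A).
  have inj : {in X0 &, injective f}.
    move=> F G _ _ [e1 e2]; apply/setP => x.
    have : (x \in F :&: A) = (x \in G :&: A) by rewrite e1.
    have : (x \in F :|: A) = (x \in G :|: A) by rewrite e2.
    rewrite !inE; case: (x \in A); rewrite ?andbT ?andbF ?orbT ?orbF //.
  rewrite -hD -card_powerset -cardsX -(card_in_imset inj).
  apply: subset_leq_card; apply/subsetP => _ /imsetP [F FX0 ->].
  move: FX0; rewrite !inE negb_or => /andP [/andP [nFa nFb] FF'].
  rewrite FF' /= in nFa nFb.
  apply/andP; split.
  - 
    apply/subsetP => x; rewrite !inE => /andP [xF xA].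
    rewrite xA andbT; apply/andP; split; apply/eqP => e; subst x.
    + by rewrite xF in nFb.
    + by rewrite xF in nFa.
  - by rewrite uc // subsetUr.
have [le|le] := leqP #|Sb| #|Sa|.
  exists a => //. rewrite -/Sa. nia.
exists b => //. rewrite -/Sb. nia.
Qed.

Theorem proposition3p4 (n : nat) (FF : {set {set 'I_n}}) :
  (1 <= n)%N ->
  union_closed FF ->
  \bigcup_(A in FF) A = [set: 'I_n] ->
  forall A, A \in FF -> (2 <= #|A|)%N ->
  exists2 y, y \in A &
    ((#|[set F in FF | y \in F]|%:R : rat) >=
       (2 ^ (#|A| - 2) + 1)%:R^-1 * #|FF|%:R)%R.
Proof.
move=> _ uc _ A AF A2.
have [y yA le] := @key_nat _ FF uc A AF A2.
exists y => //.
have cpos : (0 < (2 ^ (#|A| - 2) + 1)%:R :> rat)%R by rewrite ltr0n addn1.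
rewrite mulrC ler_pdivrMr // mulrC -natrM ler_nat.
exact: le.
Qed.
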